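(* Let $s(n)$ denote the number of unlabeled semimodular lattices with $n$ elements. Then $s(n) \ge \Omega(2.5080^n)$, i.e., there is a constant $b>0$ such that $s(n) \ge b \cdot 2.5080^n$ for all sufficiently large $n$.
   Context: All lattices are finite and nonempty, counted up to isomorphism. Semimodular means upper semimodular. *)

(* Defs.v *)
From mathcomp Require Import all_boot all_order all_algebra all_fingroup.
Set Implicit Arguments. Unset Strict Implicit. Unset Printing Implicit Defensive.

(* A binary relation on the n-element carrier 'I_n, encoded as a finite
   function so that the collection of all such relations is a finType. *)
Definition brel (n : nat) := {ffun 'I_n * 'I_n -> bool}.

Section Lat.
Variable n : nat.
Implicit Types (r : brel n) (x y z a b m j : 'I_n).

Definition le r x y : bool := r (x, y).

Definition is_poset r : bool :=
  [&& [forall x, le r x x],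
      [forall x, forall y, le r x y && le r y x ==> (x == y)] &
      [forall x, forall y, forall z, le r x y && le r y z ==> le r x z]].

Definition is_join r a b j : bool :=
  [&& le r a j, le r b j & [forall z, le r a z && le r b z ==> le r j z]].

Definition is_meet r a b m : bool :=
  [&& le r m a, le r m b & [forall z, le r z a && le r z b ==> le r z m]].

Definition is_lattice r : bool :=
  [&& is_poset r,
      [forall a, forall b, exists j, is_join r a b j] &
      [forall a, forall b, exists m, is_meet r a b m]].

Definition lt r x y : bool := (x != y) && le r x y.

Definition covers r x y : bool :=
  lt r x y && [forall z, ~~ (lt r x z && lt r z y)].

Definition semimodular r : bool :=
  [forall a, forall b, forall m, forall j,
     [&& is_meet r a b m, is_join r a b j & covers r m a] ==> covers r b j].

Definition iso r r' : bool :=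
  [exists p : {perm 'I_n}, forall x, forall y, le r x y == le r' (p x) (p y)].

Definition semimod_lattices : {set brel n} :=
  [set r | is_lattice r && semimodular r].

End Lat.

Definition s (n : nat) : nat :=
  #|[set [set r' in semimod_lattices n | iso r r'] | r in semimod_lattices n]|.

(* Main.v *)
Require Import Defs.
From mathcomp Require Import all_boot all_order all_algebra all_fingroup.
From mathcomp Require Import zify.
From Stdlib Require ZArith.
Set Implicit Arguments. Unset Strict Implicit. Unset Printing Implicit Defensive.

Section Tree.
Variables (a G D : nat) (f : {ffun 'I_G * 'I_a -> 'I_a}).

Definition pf (t j : nat) : nat :=
  match (insub t : option 'I_G), (insub j : option 'I_a) with
  | Some t', Some j' => nat_of_ord (f (t', j'))
  | _, _ => 0
  end.

Lemma pfE (t : 'I_G) (j : 'I_a) : pf t j = f (t, j).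
Proof. by rewrite /pf !valK. Qed.

Lemma pf_lt t j : 0 < a -> pf t j < a.
Proof.
move=> a0; rewrite /pf; case: (insub t) => [t'|] //; case: (insub j) => [j'|] //.
Qed.

Fixpoint ancn k s j := if k is k'.+1 then ancn k' s.-1 (pf s.-1 j) else j.

Lemma ancn_lt k s j : 0 < a -> j < a -> ancn k s j < a.
Proof. move=> a0; elim: k s j => [|k IH] s j //= _; apply: IH; exact: pf_lt. Qed.

Lemma ancnD k1 k2 s j : ancn (k1 + k2) s j = ancn k1 (s - k2) (ancn k2 s j).
Proof.
elim: k2 s j => [|k2 IH] s j /=; first by rewrite addn0 subn0.
rewrite addnS /= IH; congr ancn; lia.
Qed.

Definition leT (r i s j : nat) := (r <= s) && (ancn (s - r) s j == i).

Lemma leT_refl r i : leT r i r i.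
Proof. by rewrite /leT leqnn subnn eqxx. Qed.

Lemma leT_trans r i s j t k : leT r i s j -> leT s j t k -> leT r i t k.
Proof.
move=> /andP[rs /eqP <-] /andP[st /eqP <-]; rewrite /leT (leq_trans rs st) /=.
have -> : t - r = (s - r) + (t - s) by lia.
by rewrite ancnD; have -> : t - (t - s) = s by lia.
Qed.

Lemma leT_total_down r i s j t k :
  leT r i t k -> leT s j t k -> leT r i s j || leT s j r i.
Proof.
wlog rs : r i s j / r <= s.
  move=> W h1 h2; case: (leqP r s) => h; first exact: W.
  by rewrite orbC; apply: W => //; exact: ltnW.
move=> /andP[rt /eqP <-] /andP[st /eqP <-]; apply/orP; left.
rewrite /leT rs /=.
have -> : t - r = (s - r) + (t - s) by lia.
by rewrite ancnD; have -> : t - (t - s) = s by lia.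
Qed.

Definition E := (option ('I_G.+1 * 'I_a) + 'I_D)%type.

Definition leE (x y : E) : bool :=
  match x, y with
  | inl None, _ => true
  | inl (Some _), inl None => false
  | inl (Some p), inl (Some q) => leT p.1 p.2 q.1 q.2
  | inl (Some p), inr k => p.1 <= k
  | inr _, inl _ => false
  | inr k, inr k' => k <= k'
  end.

Lemma leE_refl x : leE x x.
Proof. by case: x => [[[r i]|]|k] //=; rewrite leT_refl. Qed.

Lemma leE_trans y x z : leE x y -> leE y z -> leE x z.
Proof.
case: x => [[[r i]|]|k] //; case: y => [[[s j]|]|l] //; case: z => [[[t m]|]|p] //=.
- exact: leT_trans.
- by move=> /andP[h _] h2; exact: leq_trans h h2.
- move=> h1 h2; exact: leq_trans h1 h2.
- move=> h1 h2; exact: leq_trans h1 h2.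
Qed.

Lemma leE_anti x y : leE x y -> leE y x -> x = y.
Proof.
case: x => [[[r i]|]|k] //; case: y => [[[s j]|]|l] //=.
- move=> /andP[rs /eqP e1] /andP[sr _].
  have e : r = s by apply: val_inj; apply/eqP; rewrite eqn_leq rs sr.
  subst s; move: e1; rewrite subnn /= => e1.
  by have -> : j = i by apply: val_inj.
- move=> h1 h2; congr inr; apply: val_inj; apply/eqP; by rewrite eqn_leq h1 h2.
Qed.


Definition is_joinE x y z := [&& leE x z, leE y z & [forall w, leE x w && leE y w ==> leE z w]].
Definition is_meetE x y z := [&& leE z x, leE z y & [forall w, leE w x && leE w y ==> leE w z]].
Definition ltE x y := (x != y) && leE x y.
Definition coversE x y := ltE x y && [forall z, ~~ (ltE x z && ltE z y)].

Lemma meet_le x y : leE x y -> is_meetE x y x.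
Proof.
move=> h; rewrite /is_meetE leE_refl h /=; apply/forallP => w; apply/implyP.
by case/andP.
Qed.

Lemma join_le x y : leE x y -> is_joinE x y y.
Proof.
move=> h; rewrite /is_joinE leE_refl h /=; apply/forallP => w; apply/implyP.
by case/andP.
Qed.

Lemma meetC x y m : is_meetE x y m = is_meetE y x m.
Proof.
rewrite /is_meetE andbA [leE m x && _]andbC -andbA; congr (_ && (_ && _)).
by apply: eq_forallb => w; rewrite andbC.
Qed.

Lemma joinC x y m : is_joinE x y m = is_joinE y x m.
Proof.
rewrite /is_joinE andbA [leE x m && _]andbC -andbA; congr (_ && (_ && _)).
by apply: eq_forallb => w; rewrite andbC.
Qed.

Lemma meet_uniq x y m m' : is_meetE x y m -> is_meetE x y m' -> m = m'.
Proof.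
move=> /and3P[h1 h2 /forallP h3] /and3P[h1' h2' /forallP h3'].
apply: leE_anti.
- by move/implyP: (h3' m); apply; rewrite h1 h2.
- by move/implyP: (h3 m'); apply; rewrite h1' h2'.
Qed.

Lemma join_uniq x y m m' : is_joinE x y m -> is_joinE x y m' -> m = m'.
Proof.
move=> /and3P[h1 h2 /forallP h3] /and3P[h1' h2' /forallP h3'].
apply: leE_anti.
- by move/implyP: (h3 m'); apply; rewrite h1' h2'.
- by move/implyP: (h3' m); apply; rewrite h1 h2.
Qed.

Lemma ltE_irr x : ltE x x = false.
Proof. by rewrite /ltE eqxx. Qed.

Lemma leE_bot x : leE x (inl None) -> x = inl None.
Proof. by case: x => [[[r i]|]|k]. Qed.

Lemma neqT (p q : 'I_G.+1 * 'I_a) : (p.1 : nat) != q.1 -> inl (Some p) != inl (Some q) :> E.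
Proof. by apply: contra => /eqP [] ->. Qed.

Lemma pairT_eq (p q : 'I_G.+1 * 'I_a) : p.1 = q.1 :> nat -> p.2 = q.2 :> nat -> p = q.
Proof. by case: p q => [r i] [s j] /= e1 e2; congr pair; apply: val_inj. Qed.

Lemma cov_TT p q : coversE (inl (Some p)) (inl (Some q)) -> q.1 = p.1.+1 :> nat.
Proof.
move=> /andP[/andP[ne /= pq] /forallP H].
case/andP: (pq) => le1 /eqP e1.
have lt1 : p.1 < q.1.
  rewrite ltn_neqAle le1 andbT; apply/negP => /eqP e.
  move: ne.
  have ep : p = q.
    case: p q e e1 {pq le1 H} => [r i] [s j] /= e; have e' : r = s by apply: val_inj.
    subst s; rewrite subnn /= => e1; congr pair; exact: val_inj.
  by rewrite ep eqxx.
apply/eqP; rewrite eqn_leq lt1 andbT leqNgt; apply/negP => lt2.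
have a0 : 0 < a := leq_ltn_trans (leq0n _) (ltn_ord p.2).
have hz1 : p.1.+1 < G.+1 := ltn_trans lt2 (ltn_ord q.1).
have hz2 : ancn (q.1 - p.1.+1) q.1 q.2 < a by apply: ancn_lt.
have e2 : pf (p.1.+1).-1 (ancn (q.1 - p.1.+1) q.1 q.2) = p.2.
  rewrite -e1; have -> : q.1 - p.1 = 1 + (q.1 - p.1.+1) by lia.
  by rewrite ancnD /=; congr pf; lia.
move: (H (inl (Some (Ordinal hz1, Ordinal hz2)))); rewrite /ltE /= /leT /=; move/negP; apply.
have -> : p.1.+1 - p.1 = 1 by lia.
rewrite /= e2 !eqxx leqnSn /= !andbT ?lt1 ?(ltnW lt2) andbT.
by rewrite !neqT //= neq_ltn ?ltnSn ?lt2 ?orbT.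
Qed.


Lemma cov_BT q : coversE (inl None) (inl (Some q)) -> q.1 = 0 :> nat.
Proof.
move=> /andP[_ /forallP H]; apply/eqP; rewrite -leqn0 leqNgt; apply/negP => q0.
have a0 : 0 < a := leq_ltn_trans (leq0n _) (ltn_ord q.2).
have hz2 : ancn q.1 q.1 q.2 < a by apply: ancn_lt.
move: (H (inl (Some (ord0, Ordinal hz2)))); rewrite /ltE /= /leT /=; move/negP; apply.
rewrite subn0 eqxx andbT; apply: neqT => /=; by rewrite neq_ltn q0.
Qed.

Lemma cov_B0 (q : 'I_G.+1 * 'I_a) : q.1 = 0 :> nat -> coversE (inl None) (inl (Some q)).
Proof.
move=> q0; rewrite /coversE /ltE /=; apply/forallP => -[[[t l]|]|k] //=.
rewrite /leT; apply/negP => /andP[ne2 /andP[tq /eqP e]].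
move: tq; rewrite q0 leqn0 => /eqP t0.
move: e; rewrite t0 q0 /= => e.
move/negP: ne2; apply; apply/eqP; congr (inl (Some _)).
case: q q0 e => [s j] /= s0 e; congr pair; apply: val_inj => //=; by rewrite t0 s0.
Qed.

Lemma cov_par (p q : 'I_G.+1 * 'I_a) : q.1 = p.1.+1 :> nat -> p.2 = pf p.1 q.2 :> nat ->
  coversE (inl (Some p)) (inl (Some q)).
Proof.
move=> e1 e2; rewrite /coversE /ltE /= neqT; last by rewrite e1; apply/eqP; lia.
rewrite /= /leT e1 leqnSn.
have -> : p.1.+1 - p.1 = 1 by lia.
rewrite /= -e2 eqxx /=; apply/forallP => -[[[t l]|]|k] //=; last by rewrite andbF.
rewrite /leT e1; apply/negP => /andP[/andP[ne1 /andP[pt /eqP el]] /andP[ne2 /andP[tq /eqP eq]]].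
have : (t : nat) = p.1 \/ (t : nat) = p.1.+1 by lia.
case=> et.
- move/negP: ne1; apply; apply/eqP; congr (inl (Some _)).
  apply: pairT_eq => /=; first by rewrite et.
  by move: el; rewrite et subnn /= => ->.
- move/negP: ne2; apply; apply/eqP; congr (inl (Some _)).
  apply: pairT_eq => /=; first by rewrite et e1.
  by move: eq; rewrite et subnn /= => <-.
Qed.

Lemma cov_TD (p : 'I_G.+1 * 'I_a) (k : 'I_D) : p.1 = k :> nat -> coversE (inl (Some p)) (inr k).
Proof.
move=> e; rewrite /coversE /ltE /=.
have -> : p.1 <= k by rewrite e.
apply/forallP => -[[[t l]|]|k'] /=.
- apply/negP => /andP[/andP[ne /andP[pt /eqP el]] tk].
  move/negP: ne; apply; apply/eqP; congr (inl (Some _)); apply: pairT_eq => /=; first lia.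
  by move: el; have -> : t - p.1 = 0 by lia.
- by [].
- apply/negP => /andP[pk /andP[ne kk]].
  move/negP: ne; apply; apply/eqP; congr inr; apply: val_inj => /=; lia.
Qed.

Lemma cov_DD (k k' : 'I_D) : k' = k.+1 :> nat -> coversE (inr k) (inr k').
Proof.
move=> e; rewrite /coversE /ltE /=.
have -> : (inr k != inr k' :> E) by apply/eqP => -[] ek; move: e; rewrite ek; lia.
rewrite e leqnSn /=; apply/forallP => -[[[t l]|]|k''] //=.
apply/negP => /andP[/andP[ne1 h1] /andP[ne2 h2]].
have : (k'' : nat) = k \/ (k'' : nat) = k' by lia.
case=> ek.
- move/negP: ne1; apply; apply/eqP; congr inr; exact: val_inj.
- move/negP: ne2; apply; apply/eqP; congr inr; exact: val_inj.
Qed.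


Lemma join_TT_inc (p q : 'I_G.+1 * 'I_a) (l : 'I_D) :
  ~~ leE (inl (Some p)) (inl (Some q)) -> ~~ leE (inl (Some q)) (inl (Some p)) ->
  l = maxn p.1 q.1 :> nat -> is_joinE (inl (Some p)) (inl (Some q)) (inr l).
Proof.
move=> /= n1 n2 e; rewrite /is_joinE /= e leq_maxl leq_maxr /=.
apply/forallP => -[[[t m]|]|k] //=; apply/implyP.
- move=> /andP[h1 h2]; have := leT_total_down h1 h2.
  by rewrite (negbTE n1) (negbTE n2).
- by rewrite geq_max.
Qed.

Lemma join_TD (p : 'I_G.+1 * 'I_a) (k l : 'I_D) : k < p.1 -> l = p.1 :> nat ->
  is_joinE (inl (Some p)) (inr k) (inr l).
Proof.
move=> kp e; rewrite /is_joinE /= e leqnn (ltnW kp) /=.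
by apply/forallP => -[[[t m]|]|k'] //=; apply/implyP => /andP[].
Qed.

Lemma meet_TD_ex (p : 'I_G.+1 * 'I_a) (k : 'I_D) : k < p.1 ->
  exists m, is_meetE (inl (Some p)) (inr k) m.
Proof.
move=> kp.
have a0 : 0 < a := leq_ltn_trans (leq0n _) (ltn_ord p.2).
have h1 : k < G.+1 := ltn_trans kp (ltn_ord p.1).
have h2 : ancn (p.1 - k) p.1 p.2 < a by apply: ancn_lt.
exists (inl (Some (Ordinal h1, Ordinal h2))); rewrite /is_meetE /= /leT /= (ltnW kp) eqxx leqnn /=.
apply/forallP => -[[[t m]|]|k'] //=; apply/implyP => /andP[/andP[tp /eqP e] tk].
rewrite /leT tk /=; apply/eqP; rewrite -e.
have -> : p.1 - t = (k - t) + (p.1 - k) by lia.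
by rewrite ancnD; have -> : p.1 - (p.1 - k) = k by lia.
Qed.

Lemma meet_TT_ex (p q : 'I_G.+1 * 'I_a) : exists m, is_meetE (inl (Some p)) (inl (Some q)) m.
Proof.
have a0 : 0 < a := leq_ltn_trans (leq0n _) (ltn_ord p.2).
pose P t := [&& t <= p.1, t <= q.1 & ancn (p.1 - t) p.1 p.2 == ancn (q.1 - t) q.1 q.2].
have ub : forall t, P t -> t <= p.1 by move=> t /and3P[].
case: (boolP [exists t : 'I_G.+1, P t]) => [/existsP ex | nex].
- have exP : exists t, P t by case: ex => t Pt; exists t.
  case: (ex_maxnP exP ub) => t0 /and3P[t0p t0q /eqP e0] mx.
  have h1 : t0 < G.+1 := leq_ltn_trans t0p (ltn_ord p.1).
  have h2 : ancn (p.1 - t0) p.1 p.2 < a by apply: ancn_lt.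
  exists (inl (Some (Ordinal h1, Ordinal h2))); rewrite /is_meetE /= /leT /= t0p t0q -e0 eqxx /=.
  apply/forallP => -[[[t m]|]|k'] //=; apply/implyP => /andP[/andP[tp /eqP ep] /andP[tq /eqP eq]].
  have Pt : P t by rewrite /P tp tq ep eq eqxx.
  have tt0 := mx _ Pt.
  rewrite /leT tt0 /=; apply/eqP; rewrite -ep.
  have -> : p.1 - t = (t0 - t) + (p.1 - t0) by lia.
  by rewrite ancnD; have -> : p.1 - (p.1 - t0) = t0 by lia.
- exists (inl None); rewrite /is_meetE /=.
  apply/forallP => -[[[t m]|]|k'] //=; apply/implyP => /andP[/andP[tp /eqP ep] /andP[tq /eqP eq]].
  case/negP: nex; apply/existsP; exists t; by rewrite /P tp tq ep eq eqxx.
Qed.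

Hypothesis GD : G < D.

Lemma leq_G (r : 'I_G.+1) : r < D.
Proof. exact: leq_ltn_trans (ltn_ord r : r <= G) GD. Qed.

Lemma meet_ex x y : exists m, is_meetE x y m.
Proof.
case: (boolP (leE x y)) => [h|nxy]; first by exists x; exact: meet_le.
case: (boolP (leE y x)) => [h|nyx]; first by exists y; rewrite meetC; exact: meet_le.
move: nxy nyx; case: x => [[p|]|k]; case: y => [[q|]|l] //=.
- move=> _ _; exact: meet_TT_ex.
- by rewrite -ltnNge => kp _; apply: meet_TD_ex.
- by move=> _; rewrite -ltnNge => kp; case: (meet_TD_ex kp) => m hm; exists m; rewrite meetC.
- by case: (leqP k l) => // /ltnW ->.
Qed.

Lemma join_ex x y : exists m, is_joinE x y m.
Proof.
case: (boolP (leE x y)) => [h|nxy]; first by exists y; exact: join_le.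
case: (boolP (leE y x)) => [h|nyx]; first by exists x; rewrite joinC; exact: join_le.
move: nxy nyx; case: x => [[p|]|k]; case: y => [[q|]|l] //.
- move=> n1 n2.
  have hm : maxn p.1 q.1 < D by rewrite gtn_max !leq_G.
  exists (inr (Ordinal hm)); exact: join_TT_inc.
- rewrite /= -ltnNge => kp _; exists (inr (Ordinal (leq_G p.1))); exact: join_TD.
- move=> _; rewrite /= -ltnNge => kp; exists (inr (Ordinal (leq_G q.1))); rewrite joinC; exact: join_TD.
- by rewrite /=; case: (leqP k l) => // /ltnW ->.
Qed.

Lemma semimodE x y m j : is_meetE x y m -> is_joinE x y j -> coversE m x -> coversE y j.
Proof.
move=> hm hj hc.
case: (boolP (leE x y)) => [h|nxy].
  by move: hc; rewrite (meet_uniq hm (meet_le h)) /coversE ltE_irr.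
case: (boolP (leE y x)) => [h|nyx].
  have e1 : m = y by apply: (meet_uniq hm); rewrite meetC; exact: meet_le.
  have e2 : j = x by apply: (join_uniq hj); rewrite joinC; exact: join_le.
  by rewrite e2; rewrite e1 in hc.
case/and3P: (hm) => mx my _.
move: nxy nyx hm hj hc mx my; case: x => [[p|]|k]; case: y => [[q|]|l] //.
- move=> n1 n2 hm hj hc mx my.
  have hmx : maxn p.1 q.1 < D by rewrite gtn_max !leq_G.
  have ej := join_uniq hj (join_TT_inc (l := Ordinal hmx) n1 n2 erefl).
  rewrite ej; apply: cov_TD => /=.
  suff : p.1 <= q.1 by move=> h; rewrite (maxn_idPr h).
  move: hc mx my; case: m {hm} => [[t|]|k] //.
  + move=> /cov_TT e mx' /andP[tq /eqP et].
    rewrite e ltn_neqAle tq andbT; apply/negP => /eqP e'.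
    have tq' : t = q by apply: pairT_eq => //; move: et; rewrite e' subnn.
    by move: n2; rewrite -tq' /=; move=> /negP; apply.
  + by move=> /cov_BT ->.
- move=> /= n1 _ _ hj hc mx my.
  have lp : l < p.1 by rewrite ltnNge.
  rewrite (join_uniq hj (join_TD (l:=Ordinal (leq_G p.1)) lp erefl)).
  apply: cov_DD => /=.
  move: hc mx my; case: m => [[t|]|k] //.
  + by move=> /cov_TT e _ /= tl; rewrite e; congr S; apply/eqP; rewrite eqn_leq tl -ltnS -e lp.
  + by move=> /cov_BT e; move: lp; rewrite e.
- move=> /= _ n2 _ hj _ _ _.
  have kq : k < q.1 by rewrite ltnNge.
  have hj' : is_joinE (inr k) (inl (Some q)) (inr (Ordinal (leq_G q.1))).
    by rewrite joinC; apply: join_TD.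
  rewrite (join_uniq hj hj'); exact: cov_TD.
- by move=> /= n1 n2; case: (leqP k l) n1 n2 => // /ltnW ->.
Qed.

End Tree.

Definition conjf (a G : nat) (sg : {ffun 'I_G.+1 -> {perm 'I_a}}) (f : {ffun 'I_G * 'I_a -> 'I_a}) :
  {ffun 'I_G * 'I_a -> 'I_a} :=
  [ffun p => sg (widen_ord (leqnSn G) p.1) (f (p.1, ((sg (lift ord0 p.1))^-1)%g p.2))].

Section Iso.
Variables (a G D : nat) (f0 f1 : {ffun 'I_G * 'I_a -> 'I_a}).
Hypothesis a1 : 1 < a.
Variable q : E a G D -> E a G D.
Hypothesis qinj : injective q.
Hypothesis qle : forall x y, leE (D:=D) f0 x y = leE (D:=D) f1 (q x) (q y).

Let L0 := leE (D:=D) f0.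
Let L1 := leE (D:=D) f1.

Lemma q_bij : bijective q. Proof. exact: injF_bij. Qed.

Lemma q_forall (P : pred (E a G D)) : [forall z, P (q z)] = [forall z, P z].
Proof.
case: q_bij => qi K1 K2; apply/forallP/forallP => H z; last exact: H.
by rewrite -(K2 z); apply: H.
Qed.

Lemma q_lt x y : ltE (D:=D) f0 x y = ltE (D:=D) f1 (q x) (q y).
Proof. by rewrite /ltE (inj_eq qinj) qle. Qed.

Lemma q_cov x y : coversE (D:=D) f0 x y = coversE (D:=D) f1 (q x) (q y).
Proof.
rewrite /coversE q_lt; congr andb.
rewrite -(q_forall (fun z => ~~ (ltE (D:=D) f1 (q x) z && ltE (D:=D) f1 z (q y)))).
by apply: eq_forallb => z; rewrite !q_lt.
Qed.

Definition chainb (f : {ffun 'I_G * 'I_a -> 'I_a}) (x : E a G D) :=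
  [forall y, forall z, leE (D:=D) f y x && leE (D:=D) f z x ==> leE (D:=D) f y z || leE (D:=D) f z y].

Lemma q_chain x : chainb f0 x = chainb f1 (q x).
Proof.
rewrite /chainb -(q_forall (fun y => [forall z, leE (D:=D) f1 y (q x) && leE (D:=D) f1 z (q x) ==> leE (D:=D) f1 y z || leE (D:=D) f1 z y])).
apply: eq_forallb => y.
rewrite -(q_forall (fun z => leE (D:=D) f1 (q y) (q x) && leE (D:=D) f1 z (q x) ==> leE (D:=D) f1 (q y) z || leE (D:=D) f1 z (q y))).
by apply: eq_forallb => z; rewrite !qle.
Qed.

Lemma chain_T f (p : 'I_G.+1 * 'I_a) : chainb f (inl (Some p)).
Proof.
apply/forallP => -[[[r i]|]|k]; apply/forallP => -[[[s j]|]|l] //=; apply/implyP.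
- by case/andP; apply: leT_total_down.
all: by rewrite ?andbF.
Qed.

Lemma chain_D f (k : 'I_D) : chainb f (inr k) = false.
Proof.
have a0 : 0 < a by apply: ltnW.
apply/negP => /forallP /(_ (inl (Some (ord0, Ordinal a0)))) /forallP /(_ (inl (Some (ord0, Ordinal a1)))).
by rewrite /= /leT /=.
Qed.

Lemma q_bot : q (inl None) = inl None.
Proof.
case: q_bij => qi K1 K2.
apply: (leE_bot (f:=f1)); have := qle (inl None) (qi (inl None)); rewrite K2 /= => <- //.
Qed.

Lemma q_level (r : nat) (p : 'I_G.+1 * 'I_a) : p.1 = r :> nat ->
  exists p' : 'I_G.+1 * 'I_a, q (inl (Some p)) = inl (Some p') /\ p'.1 = p.1 :> nat.
Proof.
elim: r p => [|r IH] p pr.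
- have := cov_B0 D f0 pr; rewrite q_cov q_bot.
  have := chain_T f0 p; rewrite q_chain.
  case: (q (inl (Some p))) => [[p'|]|k] //.
  + by move=> _ /cov_BT e; exists p'; rewrite e pr.
  + by rewrite chain_D.
- have a0 : 0 < a by apply: ltnW.
  have hr : r < G.+1 by have := ltn_ord p.1; rewrite pr; apply: ltnW.
  pose pp := (Ordinal hr, Ordinal (pf_lt f0 r p.2 a0)).
  have := cov_par D (f:=f0) (p:=pp) (q:=p) pr erefl.
  case: (IH pp erefl) => pp' [epp epp1].
  rewrite q_cov epp.
  have := chain_T f0 p; rewrite q_chain.
  case: (q (inl (Some p))) => [[p'|]|k] //.
  + by move=> _ /cov_TT e; exists p'; rewrite e pr epp1.
  + by rewrite chain_D.
Qed.

Definition gfun (r : 'I_G.+1) (i : 'I_a) : 'I_a :=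
  if q (inl (Some (r, i))) is inl (Some p') then p'.2 else i.

Lemma gE r i : q (inl (Some (r, i))) = inl (Some (r, gfun r i)).
Proof.
case: (q_level (p:=(r,i)) erefl) => p' [e1 e2]; rewrite /gfun e1.
by congr (inl (Some _)); apply: pairT_eq.
Qed.

Lemma gfun_inj r : injective (gfun r).
Proof. by move=> i i' e; have := gE r i; rewrite e -gE => /qinj [] . Qed.

Lemma gpar (t : 'I_G) (i : 'I_a) :
  f1 (t, gfun (lift ord0 t) i) = gfun (widen_ord (leqnSn G) t) (f0 (t, i)).
Proof.
have h : leE (D:=D) f0 (inl (Some (widen_ord (leqnSn G) t, f0 (t,i)))) (inl (Some (lift ord0 t, i))).
  rewrite /= /leT /= /bump leq0n add1n leqnSn.
  have -> : t.+1 - t = 1 by lia.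
  by rewrite /= pfE eqxx.
move: h; rewrite qle !gE /= /leT /= /bump leq0n add1n => /andP[_].
have -> : t.+1 - t = 1 by lia.
by rewrite /= pfE => /eqP e; apply: val_inj.
Qed.

Lemma f1_conj : exists sg, f1 = conjf sg f0.
Proof.
exists [ffun r => perm (@gfun_inj r)]; apply/ffunP => -[t j]; rewrite !ffunE /=.
set i := ((perm (@gfun_inj (lift ord0 t)))^-1)%g j.
have ej : j = gfun (lift ord0 t) i by rewrite -{1}(permKV (perm (@gfun_inj (lift ord0 t))) j) permE.
by rewrite {1}ej gpar permE.
Qed.

End Iso.

Lemma fiber_count (A B : finType) (phi : A -> B) (M : nat) :
  (forall x, #|[set y | phi y == phi x]| <= M) -> #|A| <= M * #|[set phi x | x in A]|.
Proof.
move=> HM.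
rewrite -[#|A|]sum1_card (partition_big phi (mem [set phi x | x in A])) /=; last first.
  by move=> x _; apply: imset_f.
rewrite mulnC -sum_nat_const; apply: leq_sum => b /imsetP[x _ ->].
by rewrite sum1_card (leq_trans _ (HM x)) // subset_leq_card //; apply/subsetP => y; rewrite !inE.
Qed.

Section Count.
Variables (a G D n : nat).
Hypothesis a1 : 1 < a.
Hypothesis GD : G < D.
Hypothesis Hn : #|{: E a G D}| = n.

Definition hh (x : 'I_n) : E a G D := enum_val (cast_ord (esym Hn) x).
Definition hinv (e : E a G D) : 'I_n := cast_ord Hn (enum_rank e).

Lemma hK : cancel hh hinv.
Proof. by move=> x; rewrite /hh /hinv enum_valK cast_ordKV. Qed.
Lemma hinvK : cancel hinv hh.
Proof. by move=> e; rewrite /hh /hinv cast_ordK enum_rankK. Qed.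

Lemma forall_h (P : pred (E a G D)) : [forall x : 'I_n, P (hh x)] = [forall e, P e].
Proof.
apply/forallP/forallP => H e; last exact: H.
by rewrite -(hinvK e); apply: H.
Qed.

Definition Rel (f : {ffun 'I_G * 'I_a -> 'I_a}) : brel n :=
  [ffun p : 'I_n * 'I_n => leE (D:=D) f (hh p.1) (hh p.2)].

Lemma leR f x y : le (Rel f) x y = leE f (hh x) (hh y).
Proof. by rewrite /le ffunE. Qed.

Lemma is_joinR f x y z : is_join (Rel f) x y z = is_joinE f (hh x) (hh y) (hh z).
Proof.
rewrite /is_join /is_joinE !leR; congr (_ && (_ && _)).
rewrite -(forall_h (fun w => leE f (hh x) w && leE f (hh y) w ==> leE f (hh z) w)).
by apply: eq_forallb => w; rewrite !leR.
Qed.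

Lemma is_meetR f x y z : is_meet (Rel f) x y z = is_meetE f (hh x) (hh y) (hh z).
Proof.
rewrite /is_meet /is_meetE !leR; congr (_ && (_ && _)).
rewrite -(forall_h (fun w => leE f w (hh x) && leE f w (hh y) ==> leE f w (hh z))).
by apply: eq_forallb => w; rewrite !leR.
Qed.

Lemma ltR f x y : lt (Rel f) x y = ltE f (hh x) (hh y).
Proof. by rewrite /lt /ltE leR (inj_eq (can_inj hK)). Qed.

Lemma coversR f x y : covers (Rel f) x y = coversE f (hh x) (hh y).
Proof.
rewrite /covers /coversE ltR; congr andb.
rewrite -(forall_h (fun w => ~~ (ltE f (hh x) w && ltE f w (hh y)))).
by apply: eq_forallb => w; rewrite !ltR.
Qed.

Lemma Rel_semimod f : Rel f \in semimod_lattices n.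
Proof.
rewrite inE; apply/andP; split.
- apply/and3P; split.
  + apply/and3P; split.
    * by apply/forallP => x; rewrite leR leE_refl.
    * apply/forallP => x; apply/forallP => y; apply/implyP; rewrite !leR => /andP[h1 h2].
      by apply/eqP; apply: (can_inj hK); apply: leE_anti h1 h2.
    * apply/forallP => x; apply/forallP => y; apply/forallP => z; apply/implyP.
      by rewrite !leR => /andP[h1 h2]; apply: leE_trans h1 h2.
  + apply/forallP => x; apply/forallP => y; case: (@join_ex a G D f GD (hh x) (hh y)) => j hj.
    by apply/existsP; exists (hinv j); rewrite is_joinR hinvK.
  + apply/forallP => x; apply/forallP => y; case: (@meet_ex a G D f (hh x) (hh y)) => j hj.
    by apply/existsP; exists (hinv j); rewrite is_meetR hinvK.
- apply/forallP => x; apply/forallP => y; apply/forallP => m; apply/forallP => j.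
  apply/implyP; rewrite is_meetR is_joinR !coversR => /and3P[hm hj hc].
  exact: (@semimodE a G D f GD _ _ _ _ hm hj hc).
Qed.

Lemma iso_conj f0 f1 : iso (Rel f0) (Rel f1) -> exists sg, f1 = conjf sg f0.
Proof.
case/existsP => p /forallP H.
pose q e := hh (p (hinv e)).
have qinj : injective q.
  by move=> x y /(can_inj hK) /perm_inj /(can_inj hinvK).
have qle : forall x y, leE (D:=D) f0 x y = leE f1 (q x) (q y).
  move=> x y; move/forallP: (H (hinv x)) => /(_ (hinv y)) /eqP.
  by rewrite !leR !hinvK.
exact: (f1_conj a1 qinj qle).
Qed.

Lemma iso_refl (r : brel n) : iso r r.
Proof. by apply/existsP; exists 1%g; apply/forallP => x; apply/forallP => y; rewrite !perm1. Qed.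

Definition cls f := [set r' in semimod_lattices n | iso (Rel f) r'].

Lemma main_count : a ^ (G * a) <= (a`!) ^ G.+1 * s n.
Proof.
have -> : a ^ (G * a) = #|{: {ffun 'I_G * 'I_a -> 'I_a}}| by rewrite card_ffun card_prod !card_ord.
have -> : (a`!) ^ G.+1 = #|{: {ffun 'I_G.+1 -> {perm 'I_a}}}|.
  rewrite card_ffun card_ord; congr (_ ^ _).
  by rewrite (card_Sn a).
apply: (leq_trans (fiber_count (phi := cls) (M := #|{: {ffun 'I_G.+1 -> {perm 'I_a}}}|) _)).
  move=> f0; rewrite -cardsT.
  apply: (leq_trans _ (leq_imset_card (fun sg => conjf sg f0) [set: {ffun 'I_G.+1 -> {perm 'I_a}}])).
  apply: subset_leq_card; apply/subsetP => f1; rewrite inE => /eqP e.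
  have : Rel f1 \in cls f1 by rewrite inE Rel_semimod iso_refl.
  rewrite e inE => /andP[_ /iso_conj [sg ->]].
  by apply/imsetP; exists sg; rewrite ?inE.
apply: leq_mul => //.
apply: subset_leq_card; apply/subsetP => x /imsetP[f _ ->]; apply/imsetP.
by exists (Rel f); first exact: Rel_semimod.
Qed.

End Count.

Fixpoint Zf (n : nat) : BinNums.Z := if n is n'.+1 then BinInt.Z.mul (BinInt.Z.of_nat n) (Zf n') else BinNums.Zpos BinNums.xH.

Lemma Zf_fact n : BinInt.Z.of_nat (n`!) = Zf n.
Proof.
elim: n => [|n IH] //; rewrite factS Znat.Nat2Z.inj_mul IH.
by [].
Qed.

Lemma Z_expn m k : BinInt.Z.of_nat (m ^ k) = BinInt.Z.pow (BinInt.Z.of_nat m) (BinInt.Z.of_nat k).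
Proof.
elim: k => [|k IH] //; rewrite expnS Znat.Nat2Z.inj_mul IH Znat.Nat2Z.inj_succ BinInt.Z.pow_succ_r //.
exact: Znat.Nat2Z.is_nonneg.
Qed.

Lemma leZ x y : BinInt.Z.le (BinInt.Z.of_nat x) (BinInt.Z.of_nat y) -> x <= y.
Proof. by move=> h; apply/leP; apply/Znat.Nat2Z.inj_le. Qed.

Lemma Kgen (x u v w z k : nat) :
  BinInt.Z.le (BinInt.Z.mul (Zf x) (BinInt.Z.pow (BinInt.Z.of_nat u) (BinInt.Z.of_nat k)))
    (BinInt.Z.mul (BinInt.Z.pow (BinInt.Z.of_nat v) (BinInt.Z.of_nat w)) (BinInt.Z.pow (BinInt.Z.of_nat z) (BinInt.Z.of_nat k))) ->
  x`! * u ^ k <= v ^ w * z ^ k.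
Proof. by move=> h; apply: leZ; rewrite !Znat.Nat2Z.inj_mul !Z_expn Zf_fact. Qed.

Lemma Kfact : 47`! * 2508 ^ 48 <= 47 ^ 47 * 1000 ^ 48.
Proof. apply: Kgen; by vm_compute. Qed.

Lemma main_count47 (G D n : nat) : G < D -> 1 + G.+1 * 47 + D = n ->
  47 ^ (G * 47) <= (47`!) ^ G.+1 * s n.
Proof.
move=> GD Hn.
have Hc : #|{: E 47 G D}| = n by rewrite card_sum card_option card_prod !card_ord -Hn; lia.
exact: (main_count (isT : 1 < 47) GD Hc).
Qed.

Unset Implicit Arguments.
Import Order.TTheory GRing.Theory Num.Theory.
Local Open Scope ring_scope.

Lemma final_ineq (c P X S : rat) (G n : nat) :
  1 < c -> 0 < P -> 0 < X ->
  c ^+ 48 * X <= P ->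
  P ^+ G.+1 = P * (P ^+ G) ->
  P ^+ G <= X ^+ G.+1 * S ->
  (n <= 48 * G.+1 + 48)%N ->
  (P * c ^+ 48)^-1 * c ^+ n <= S.
Proof.
move=> c1 P0 X0 K PG mainR hn.
have c0 : 0 < c by apply: lt_trans c1.
have KH : (c ^+ 48 * X) ^+ G.+1 <= P ^+ G.+1.
  apply: lerXn2r => //; rewrite nnegrE ?mulr_ge0 ?exprn_ge0 ?ltW //.
have cS : c ^+ (48 * G.+1) <= P * S.
  rewrite -(ler_pM2r (exprn_gt0 G.+1 X0)).
  apply: (le_trans (y := P ^+ G.+1)).
    by rewrite exprM -exprMn.
  by rewrite PG -mulrA ler_pM2l // mulrC.
have cn : c ^+ n <= c ^+ (48 * G.+1) * c ^+ 48.
  by rewrite -exprD ler_eXn2l.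
apply: (le_trans (y := (P * c ^+ 48)^-1 * (c ^+ (48 * G.+1) * c ^+ 48))).
  by rewrite ler_pM2l // invr_gt0 mulr_gt0 // exprn_gt0.
rewrite invfM mulrACA mulVf ?expf_neq0 ?gt_eqF // mulr1.
by rewrite mulrC ler_pdivrMr // mulrC.
Qed.

Lemma gen_c1 (x y : nat) : (y < x)%N -> (0 < y)%N -> 1 < (x%:R / y%:R : rat).
Proof. by move=> yx y0; rewrite ltr_pdivlMr ?ltr0n // mul1r ltr_nat. Qed.

Lemma gen_pos (k m : nat) : (0 < k)%N -> 0 < (k%:R : rat) ^+ m.
Proof. by move=> k0; apply: exprn_gt0; rewrite ltr0n. Qed.

Lemma gen_K (f u v w z k : nat) : (f * u ^ k <= v ^ w * z ^ k)%N -> (0 < z)%N ->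
  (u%:R / z%:R) ^+ k * (f%:R : rat) <= v%:R ^+ w.
Proof.
move=> h z0; move: h; rewrite -(ler_nat rat) !natrM !natrX => h.
rewrite expr_div_n mulrAC ler_pdivrMr; last by apply: exprn_gt0; rewrite ltr0n.
by rewrite mulrC.
Qed.

Lemma gen_fact_pos (m : nat) : 0 < ((m`!)%:R : rat).
Proof. by rewrite ltr0n fact_gt0. Qed.

Lemma mainR_gen (m f G n : nat) : (m ^ (G * m) <= f ^ G.+1 * s n)%N ->
  ((m%:R : rat) ^+ m) ^+ G <= (f%:R) ^+ G.+1 * (s n)%:R.
Proof. by rewrite -(ler_nat rat) natrM !natrX -exprM mulnC. Qed.

Lemma final_gen (c P X : rat) : 1 < c -> 0 < P -> 0 < X -> c ^+ 48 * X <= P ->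
  (forall n H : nat, (1 <= H)%N -> (48 * H <= n.-1)%N -> (n.-1 < 48 * H.+1)%N ->
      P ^+ H.-1 <= X ^+ H * (s n)%:R) ->
  exists b, 0 < b /\ exists N, forall n, (N <= n)%N -> b * c ^+ n <= (s n)%:R.
Proof.
move=> c1 P0 X0 K HM.
have c0 : 0 < c by apply: lt_trans c1.
exists ((P * c ^+ 48)^-1); split.
  by rewrite invr_gt0; apply: mulr_gt0 P0 (exprn_gt0 48 c0).
exists 49%N => n hn.
pose H := ((n.-1) %/ 48)%N.
have hH1 : (48 * H <= n.-1)%N by rewrite mulnC leq_trunc_div.
have hH2 : (n.-1 < 48 * H.+1)%N by rewrite mulnC ltn_ceil.
have H1 : (1 <= H)%N by rewrite /H leq_divRL //; lia.
have := HM n H H1 hH1 hH2.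
have -> : H = (H.-1).+1 by lia.
move=> mainR.
apply: (@final_ineq c P X (s n)%:R H.-1 n c1 P0 X0 K) => //.
- by rewrite exprS.
- lia.
Qed.

Theorem corollary2p5 :
  exists b : rat, 0 < b /\
    exists N : nat, forall n : nat, (N <= n)%N ->
      b * (2508%:R / 1000%:R) ^+ n <= (s n)%:R.
Proof.
have c1 := @gen_c1 2508 1000 isT isT.
have P0 := @gen_pos 47 47 isT.
have K := @gen_K (47`!) 2508 47 47 1000 48 Kfact (isT : (0 < 1000)%N).
have X0 := gen_fact_pos 47.
apply: (final_gen _ _ _ c1 P0 X0 K).
move=> n H H1 hH1 hH2.
have GD : (H.-1 < n.-1 - 47 * H)%N by lia.
have Hn : (1 + (H.-1).+1 * 47 + (n.-1 - 47 * H))%N = n by lia.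
have := mainR_gen _ _ _ _ (main_count47 GD Hn).
by have -> : (H.-1).+1 = H by lia.
Qed.
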